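(* Let $\Delta$ be a local derivation of $\mathcal{S}$ with $\Delta(L_0)=\Delta(L_1)=0$. Then $\Delta(G_0)=0$.
   Context: $\mathcal{S}$ is the centerless super Virasoro algebra: the Lie superalgebra over $\mathbb{C}$ with basis $\{L_m,G_n: m,n\in\mathbb{Z}\}$, $L_m$ even, $G_n$ odd, and brackets $[L_m,L_n]=(m-n)L_{m+n}$, $[L_m,G_r]=(\frac m2-r)G_{m+r}$, $[G_r,G_s]=2L_{r+s}$. A homogeneous linear map $D$ of parity $|D|$ is a derivation if $D([x,y])=[D(x),y]+(-1)^{|D||x|}[x,D(y)]$ for homogeneous $x,y$; derivations are sums of even and odd ones. A linear map $\Delta:\mathcal{S}\to\mathcal{S}$ is a local derivation if for every $x$ there is a derivation $D_x$ with $\Delta(x)=D_x(x)$. *)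

(* Defs.v *)
From mathcomp Require Import all_boot all_algebra.
From mathcomp Require Import complex.
From mathcomp Require Import reals Rstruct.
From mathcomp Require Import finmap monalg.
Set Implicit Arguments. Unset Strict Implicit. Unset Printing Implicit Defensive.
Import GRing.Theory.
Local Open Scope ring_scope.

Definition C : numClosedFieldType := (Rdefinitions.R)[i].

(* Finitely supported families Z -> C, i.e. the span of symbols indexed by Z. *)
Definition Fam := {malg C[int]}.

(* The centerless super Virasoro algebra S = S_0 (+) S_1 as a vector space:
   first component = even part (span of the L_m), second = odd part (span of G_n). *)
Definition S : lmodType C := (Fam * Fam)%type.

Definition L (m : int) : S := (<< m >>, 0).
Definition G (n : int) : S := (0, << n >>).

(* Bilinear extension of the brackets
   [L_m,L_n]=(m-n)L_{m+n}, [L_m,G_r]=(m/2-r)G_{m+r}, [G_r,L_m]=-(m/2-r)G_{m+r},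
   [G_r,G_s]=2L_{r+s}. *)
Definition bracket (x y : S) : S :=
  ( \sum_(m <- msupp x.1) \sum_(n <- msupp y.1)
        << (x.1@_m * y.1@_n * (m - n)%:~R) *g (m + n) >>
    + \sum_(r <- msupp x.2) \sum_(s <- msupp y.2)
        << (x.2@_r * y.2@_s * 2) *g (r + s) >>
  , \sum_(m <- msupp x.1) \sum_(r <- msupp y.2)
        << (x.1@_m * y.2@_r * (m%:~R / 2 - r%:~R)) *g (m + r) >>
    - \sum_(r <- msupp x.2) \sum_(m <- msupp y.1)
        << (x.2@_r * y.1@_m * (m%:~R / 2 - r%:~R)) *g (m + r) >> ).

(* homogeneity: parity false = even, true = odd *)
Definition homog (p : bool) (x : S) : Prop :=
  if p then x.1 = 0 else x.2 = 0.

Definition is_linear (f : S -> S) : Prop :=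
  forall (k : C) (u v : S), f (k *: u + v) = k *: f u + f v.

Definition is_homog_map (p : bool) (D : S -> S) : Prop :=
  forall (q : bool) (x : S), homog q x -> homog (p (+) q) (D x).

Definition is_homog_derivation (p : bool) (D : S -> S) : Prop :=
  [/\ is_linear D, is_homog_map p D &
      forall (q r : bool) (x y : S), homog q x -> homog r y ->
        D (bracket x y) = bracket (D x) y + (-1) ^+ (p && q) *: bracket x (D y)].

Definition is_derivation (D : S -> S) : Prop :=
  exists D0 D1 : S -> S,
    [/\ is_homog_derivation false D0, is_homog_derivation true D1 &
        forall x, D x = D0 x + D1 x].

Definition is_local_derivation (Delta : S -> S) : Prop :=
  is_linear Delta /\
  forall x : S, exists D : S -> S, is_derivation D /\ Delta x = D x.

(* Main.v *)
Require Import Defs.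
From mathcomp Require Import all_boot all_algebra.
From mathcomp Require Import complex reals Rstruct finmap monalg.
Local Open Scope ring_scope.
Import GRing.Theory Num.Theory.
Lemma coef_sum (p : Fam) (f : int -> C) (k n : int) :
  (\sum_(m <- msupp p) << (p@_m * f m) *g (m + k) >>)@_n = p@_(n - k) * f (n - k).
Proof.
rewrite raddf_sum /=.
under eq_bigr => m _ do rewrite mcoeffU mulrb.
rewrite -big_mkcond /=.
have E : forall m : int, (m + k == n) = (m == n - k).
  by move=> m; rewrite [RHS]eq_sym subr_eq eq_sym.
under eq_bigl => m do rewrite E.
case: (boolP (n - k \in msupp p)) => H.
  by rewrite (fbig_pred1_inj (k := id)).
rewrite big1_seq ?(mcoeff_outdom H) ?mul0r // => m /andP [/eqP -> Hm].
by rewrite Hm in H.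
Qed.
Lemma coef_sumF (p : Fam) (F f : int -> C) (h : int -> int) (k n : int) :
  (forall a, F a = p@_a * f a) -> (forall a, h a = a + k) ->
  (\sum_(a <- msupp p) << F a *g h a >>)@_n = p@_(n - k) * f (n - k).
Proof.
move=> HF Hh; rewrite -coef_sum; congr (_ @_ _); apply: eq_bigr => a _.
by rewrite HF Hh.
Qed.

Definition cL (n : int) (y : S) : C := y.1@_n.
Definition cG (n : int) (y : S) : C := y.2@_n.

Lemma msuppU1' (m : int) : msupp (<< m >> : Fam) = [fset m]%fset.
Proof. by rewrite msuppU oner_eq0. Qed.

Lemma sum_in0 (s : seq int) (F : int -> int -> Fam) :
  \sum_(a <- s) \sum_(b <- (fset0 : {fset int})) F a b = 0.
Proof. by rewrite big1 // => a _; rewrite big_seq_fset0. Qed.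
Lemma sum_in1 (s : seq int) (F : int -> int -> Fam) m :
  \sum_(a <- s) \sum_(b <- [fset m]%fset) F a b = \sum_(a <- s) F a m.
Proof. by apply: eq_bigr => a _; rewrite big_seq_fset1. Qed.

Ltac bsimp := rewrite /bracket /L /G /cL /cG /=;
  rewrite ?msupp0 ?msuppU1' ?sum_in0 ?sum_in1 ?big_seq_fset0 ?big_seq_fset1
     ?mcoeffUU ?mcoeffD ?mcoeffN ?mcoeff0 ?oppr0 ?addr0 ?add0r ?subr0 ?sub0r.

Ltac csum k := (erewrite (@coef_sumF _ _ _ _ k); last first;
   [ by move=> ?; rewrite addrC | by move=> ?; rewrite ?mulr1 ?mul1r ]).


Fact br_key : unit. Proof. by []. Qed.
Definition br := locked_with br_key bracket.
Lemma br_def : br = bracket. Proof. exact: locked_withE. Qed.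


Lemma cL_yL y m n : cL n (br y (L m)) = cL (n - m) y * ((n - m) - m)%:~R.
Proof. rewrite br_def. by bsimp; erewrite (@coef_sumF _ _ (fun a => (a - m)%:~R) _ m) => // a; rewrite mulr1. Qed.
Lemma cG_yL y m n : cG n (br y (L m)) = - (cG (n - m) y * (m%:~R / 2 - (n - m)%:~R)).
Proof. rewrite br_def. bsimp; try congr (- _); erewrite (@coef_sumF _ _ (fun a => m%:~R / 2 - a%:~R) _ m); [by [] | by move=> a; rewrite ?mulr1 ?mul1r | by move=> a; rewrite ?(addrC a)]. Qed.
Lemma cL_yG y s n : cL n (br y (G s)) = cG (n - s) y * 2.
Proof. rewrite br_def. bsimp; try congr (- _); erewrite (@coef_sumF _ _ (fun a => 2) _ s); [by [] | by move=> a; rewrite ?mulr1 ?mul1r | by move=> a; rewrite ?(addrC a)]. Qed.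
Lemma cG_yG y s n : cG n (br y (G s)) = cL (n - s) y * ((n - s)%:~R / 2 - s%:~R).
Proof. rewrite br_def. bsimp; try congr (- _); erewrite (@coef_sumF _ _ (fun a => a%:~R / 2 - s%:~R) _ s); [by [] | by move=> a; rewrite ?mulr1 ?mul1r | by move=> a; rewrite ?(addrC a)]. Qed.
Lemma cL_Ly m y n : cL n (br (L m) y) = cL (n - m) y * (m - (n - m))%:~R.
Proof. rewrite br_def. by bsimp; erewrite (@coef_sumF _ _ (fun a => (m - a)%:~R) _ m) => // a; rewrite ?mul1r // addrC. Qed.
Lemma cG_Ly m y n : cG n (br (L m) y) = cG (n - m) y * (m%:~R / 2 - (n - m)%:~R).
Proof. rewrite br_def. bsimp; try congr (- _); erewrite (@coef_sumF _ _ (fun a => m%:~R / 2 - a%:~R) _ m); [by [] | by move=> a; rewrite ?mulr1 ?mul1r | by move=> a; rewrite ?(addrC a)]. Qed.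
Lemma cL_Gy r y n : cL n (br (G r) y) = cG (n - r) y * 2.
Proof. rewrite br_def. bsimp; try congr (- _); erewrite (@coef_sumF _ _ (fun a => 2) _ r); [by [] | by move=> a; rewrite ?mulr1 ?mul1r | by move=> a; rewrite ?(addrC a)]. Qed.
Lemma cG_Gy r y n : cG n (br (G r) y) = - (cL (n - r) y * ((n - r)%:~R / 2 - r%:~R)).
Proof. rewrite br_def. bsimp; try congr (- _); erewrite (@coef_sumF _ _ (fun a => a%:~R / 2 - r%:~R) _ r); [by [] | by move=> a; rewrite ?mulr1 ?mul1r | by move=> a; rewrite ?(addrC a)]. Qed.

From mathcomp Require Import ring lra zify.

Lemma S_ext (x y : S) : (forall n, cL n x = cL n y) -> (forall n, cG n x = cG n y) -> x = y.
Proof.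
case: x => x1 x2; case: y => y1 y2 /= H1 H2.
by congr pair; apply/malgP.
Qed.

Lemma cLD n (u w : S) : cL n (u + w) = cL n u + cL n w. Proof. exact: mcoeffD. Qed.
Lemma cGD n (u w : S) : cG n (u + w) = cG n u + cG n w. Proof. exact: mcoeffD. Qed.
Lemma cLZ n k (u : S) : cL n (k *: u) = k * cL n u. Proof. exact: mcoeffZ. Qed.
Lemma cGZ n k (u : S) : cG n (k *: u) = k * cG n u. Proof. exact: mcoeffZ. Qed.
Lemma cL0 n : cL n 0 = 0. Proof. exact: mcoeff0. Qed.
Lemma cG0 n : cG n 0 = 0. Proof. exact: mcoeff0. Qed.
Lemma cLL n m : cL n (L m) = (m == n)%:R. Proof. by rewrite /cL /= mcoeffU. Qed.
Lemma cGL n m : cG n (L m) = 0. Proof. exact: mcoeff0. Qed.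
Lemma cLG n m : cL n (G m) = 0. Proof. exact: mcoeff0. Qed.
Lemma cGG n m : cG n (G m) = (m == n)%:R. Proof. by rewrite /cG /= mcoeffU. Qed.

Lemma brDl_L (u w : S) m : br (u + w) (L m) = br u (L m) + br w (L m).
Proof.
apply: S_ext => n; rewrite ?cLD ?cGD ?cL_yL ?cG_yL ?cLD ?cGD; ring.
Qed.
Lemma brDl_G (u w : S) m : br (u + w) (G m) = br u (G m) + br w (G m).
Proof.
apply: S_ext => n; rewrite ?cLD ?cGD ?cL_yG ?cG_yG ?cLD ?cGD; ring.
Qed.
Lemma brDr_L (u w : S) m : br (L m) (u + w) = br (L m) u + br (L m) w.
Proof.
apply: S_ext => n; rewrite ?cLD ?cGD ?cL_Ly ?cG_Ly ?cLD ?cGD; ring.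
Qed.
Lemma brDr_G (u w : S) m : br (G m) (u + w) = br (G m) u + br (G m) w.
Proof.
apply: S_ext => n; rewrite ?cLD ?cGD ?cL_Gy ?cG_Gy ?cLD ?cGD; ring.
Qed.

Lemma idx_eq (i j n : int) : (j == n - i) = (n == i + j).
Proof. by rewrite eq_sym subr_eq addrC. Qed.
Lemma idx_sub (i j : int) : i + j - i = j.
Proof. by rewrite addrAC subrr add0r. Qed.

Lemma brLL i j : br (L i) (L j) = (i - j)%:~R *: L (i + j).
Proof.
apply: S_ext => n; rewrite ?cL_Ly ?cG_Ly ?cLZ ?cGZ ?cLL ?cGL ?mulr0 ?mul0r //.
rewrite idx_eq eq_sym; case: (eqVneq (i + j) n) => [<-|_]; last by rewrite mul0r mulr0.
by rewrite idx_sub mul1r mulr1.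
Qed.
Lemma brLG i j : br (L i) (G j) = (i%:~R / 2 - j%:~R) *: G (i + j).
Proof.
apply: S_ext => n; rewrite ?cL_Ly ?cG_Ly ?cLZ ?cGZ ?cLG ?cGG ?mulr0 ?mul0r //.
rewrite idx_eq eq_sym; case: (eqVneq (i + j) n) => [<-|_]; last by rewrite mul0r mulr0.
by rewrite idx_sub mul1r mulr1.
Qed.
Lemma brGG i j : br (G i) (G j) = 2 *: L (i + j).
Proof.
apply: S_ext => n; rewrite ?cL_Gy ?cG_Gy ?cLZ ?cGZ ?cLG ?cGG ?cLL ?cGL ?mulr0 ?mul0r ?oppr0 //.
by rewrite idx_eq [(i + j == n)]eq_sym mulrC.
Qed.

Lemma cL_yL' k y m n : n - m = k -> cL n (br y (L m)) = cL k y * (k - m)%:~R.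
Proof. by move<-; exact: cL_yL. Qed.
Lemma cG_yL' k y m n : n - m = k -> cG n (br y (L m)) = - (cG k y * (m%:~R / 2 - k%:~R)).
Proof. by move<-; exact: cG_yL. Qed.
Lemma cL_yG' k y s n : n - s = k -> cL n (br y (G s)) = cG k y * 2.
Proof. by move<-; exact: cL_yG. Qed.
Lemma cG_yG' k y s n : n - s = k -> cG n (br y (G s)) = cL k y * (k%:~R / 2 - s%:~R).
Proof. by move<-; exact: cG_yG. Qed.
Lemma cL_Ly' k m y n : n - m = k -> cL n (br (L m) y) = cL k y * (m - k)%:~R.
Proof. by move<-; exact: cL_Ly. Qed.
Lemma cG_Ly' k m y n : n - m = k -> cG n (br (L m) y) = cG k y * (m%:~R / 2 - k%:~R).
Proof. by move<-; exact: cG_Ly. Qed.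
Lemma cL_Gy' k r y n : n - r = k -> cL n (br (G r) y) = cG k y * 2.
Proof. by move<-; exact: cL_Gy. Qed.
Lemma cG_Gy' k r y n : n - r = k -> cG n (br (G r) y) = - (cL k y * (k%:~R / 2 - r%:~R)).
Proof. by move<-; exact: cG_Gy. Qed.

Lemma lin_props (f : S -> S) : is_linear f ->
  [/\ forall u v, f (u + v) = f u + f v, forall k u, f (k *: u) = k *: f u & f 0 = 0].
Proof.
move=> Hf.
have f0 : f 0 = 0.
  have H := Hf 1 0 0; rewrite !scale1r addr0 in H.
  by apply: (addrI (f 0)); rewrite addr0 -H.
split=> //.
  by move=> u v; have := Hf 1 u v; rewrite !scale1r.
move=> k u; have H := Hf k u 0.
rewrite f0 [X in f X = _]addr0 [X in _ = X]addr0 in H; exact H.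
Qed.

Lemma homogL m : homog false (L m). Proof. by []. Qed.
Lemma homogG m : homog true (G m). Proof. by []. Qed.

Lemma sgnF p (x : S) : (-1) ^+ (p && false) *: x = x.
Proof. by rewrite andbF expr0 scale1r. Qed.
Lemma two_eq0 (y : C) : 2 * y = 0 -> y = 0.
Proof. by move/eqP; rewrite mulf_eq0 pnatr_eq0 /= => /eqP. Qed.
Lemma lincomb3 (a b c : C) (l1 r1 l2 r2 l3 r3 x : C) : l1 = r1 -> l2 = r2 -> l3 = r3 ->
  x = a * (l1 - r1) + b * (l2 - r2) + c * (l3 - r3) -> x = 0.
Proof. by move=> -> -> -> ->; rewrite !subrr !mulr0 !addr0. Qed.
Arguments lincomb3 a b c {l1 r1 l2 r2 l3 r3 x}.
Lemma lin_solve (a b X Y : C) : a * X = Y + X * b -> (a - b) * X = Y.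
Proof. by move=> H; rewrite mulrBl H; ring. Qed.


Section Der.
Variable D : S -> S.
Hypothesis HD : is_derivation D.

Lemma D_lin : is_linear D.
Proof.
case: HD => D0 [D1 [[l0 _ _] [l1 _ _] Hs]] k u v.
by rewrite !Hs l0 l1 scalerDr addrACA.
Qed.

Lemma DD u v : D (u + v) = D u + D v. Proof. by case: (lin_props _ D_lin). Qed.
Lemma DZ k u : D (k *: u) = k *: D u. Proof. by case: (lin_props _ D_lin). Qed.

Lemma LeibLL i j : D (br (L i) (L j)) = br (D (L i)) (L j) + br (L i) (D (L j)).
Proof.
case: HD => D0 [D1 [[l0 _ b0] [l1 _ b1] Hs]].
rewrite -br_def in b0 b1.
rewrite !Hs (b0 false false _ _ (homogL i) (homogL j)) (b1 false false _ _ (homogL i) (homogL j)).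
rewrite !sgnF brDl_L brDr_L.
by rewrite addrACA.
Qed.
Lemma LeibLG i j : D (br (L i) (G j)) = br (D (L i)) (G j) + br (L i) (D (G j)).
Proof.
case: HD => D0 [D1 [[l0 _ b0] [l1 _ b1] Hs]].
rewrite -br_def in b0 b1.
rewrite !Hs (b0 false true _ _ (homogL i) (homogG j)) (b1 false true _ _ (homogL i) (homogG j)).
rewrite !sgnF brDl_G brDr_L.
by rewrite addrACA.
Qed.

Lemma LLc i j n : (i - j)%:~R * cL n (D (L (i + j))) = cL n (br (D (L i)) (L j)) + cL n (br (L i) (D (L j))).
Proof. by have := congr1 (cL n) (LeibLL i j); rewrite brLL (DZ _ (L (i + j))) cLZ cLD. Qed.
Lemma LLg i j n : (i - j)%:~R * cG n (D (L (i + j))) = cG n (br (D (L i)) (L j)) + cG n (br (L i) (D (L j))).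
Proof. by have := congr1 (cG n) (LeibLL i j); rewrite brLL (DZ _ (L (i + j))) cGZ cGD. Qed.
Lemma LGc i j n : (i%:~R / 2 - j%:~R) * cL n (D (G (i + j))) = cL n (br (D (L i)) (G j)) + cL n (br (L i) (D (G j))).
Proof. by have := congr1 (cL n) (LeibLG i j); rewrite brLG (DZ _ (G (i + j))) cLZ cLD. Qed.
Lemma LGg i j n : (i%:~R / 2 - j%:~R) * cG n (D (G (i + j))) = cG n (br (D (L i)) (G j)) + cG n (br (L i) (D (G j))).
Proof. by have := congr1 (cG n) (LeibLG i j); rewrite brLG (DZ _ (G (i + j))) cGZ cGD. Qed.

Notation A := (D (L 0)).
Lemma WLL m n : (n - m)%:~R * cL n (D (L m)) = cL n (br A (L m)).
Proof.
have := LLc 0 m n; rewrite (add0r m) cL_Ly subr0 => /(lin_solve _ _ _ _) <-.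
congr (_ * _); ring.
Qed.
Lemma WGL m n : (n - m)%:~R * cG n (D (L m)) = cG n (br A (L m)).
Proof.
have := LLg 0 m n; rewrite (add0r m) cG_Ly subr0 => /(lin_solve _ _ _ _) <-.
congr (_ * _); ring.
Qed.
Lemma WLG m n : (n - m)%:~R * cL n (D (G m)) = cL n (br A (G m)).
Proof.
have := LGc 0 m n; rewrite (add0r m) cL_Ly subr0 => /(lin_solve _ _ _ _) <-.
congr (_ * _); ring.
Qed.
Lemma WGG m n : (n - m)%:~R * cG n (D (G m)) = cG n (br A (G m)).
Proof.
have := LGg 0 m n; rewrite (add0r m) cG_Ly subr0 => /(lin_solve _ _ _ _) <-.
congr (_ * _); ring.
Qed.
Lemma Z_L : cL 0 A = 0.
Proof.
have := WLL 1 1; rewrite subrr mul0r cL_yL.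
rewrite (_ : (1 - 1 : int) = 0) // (_ : (0 - 1 : int) = -1) //.
move/esym/eqP; rewrite mulf_eq0 => /orP [/eqP //|].
by rewrite intr_eq0.
Qed.
Lemma Z_G : cG 0 A = 0.
Proof.
have := WLG 0 0; rewrite subrr mul0r cL_yG subrr.
move/esym/eqP; rewrite mulf_eq0 => /orP [/eqP //|].
by rewrite pnatr_eq0.
Qed.

Lemma P0 : cG 0 (D (G 0)) = 0.
Proof.
have ZL := Z_L.
case: HD ZL => D0 [D1 [[l0 h0 b0] [l1 h1 b1] Hs]] ZL.
rewrite -br_def in b0 b1.
have E0 := b0 true true _ _ (homogG 0) (homogG 0).
have E1 := b1 true true _ _ (homogG 0) (homogG 0).
rewrite brGG in E0 E1.
have [_ s0 _] := lin_props _ l0; have [_ s1 _] := lin_props _ l1.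
rewrite s0 in E0; rewrite s1 in E1.
move: E0 E1 => /(congr1 (cL 0)) E0 /(congr1 (cL 0)) E1.
rewrite cLZ cLD cLZ cL_Gy cL_yG /= in E0.
rewrite cLZ cLD cLZ cL_Gy cL_yG /= in E1.
have H1 : cG 0 (D1 (G 0)) = 0.
  by have := h1 true (G 0) (homogG 0); rewrite /homog /= /cG => ->; rewrite mcoeff0.
rewrite Hs cGD H1 addr0.
rewrite Hs cLD in ZL.
rewrite !addr0 ?subrr expr0 mul1r in E0.
rewrite !addr0 ?subrr expr1 H1 in E1.
have Y1 : cL 0 (D1 (L 0)) = 0.
  by apply: two_eq0; rewrite E1; ring.
rewrite Y1 addr0 in ZL; rewrite ZL in E0.
apply: two_eq0; apply: two_eq0.
have -> : 2 * (2 * cG 0 (D0 (G 0))) = cG 0 (D0 (G 0)) * 2 + cG 0 (D0 (G 0)) * 2 by ring.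
by rewrite -E0 mulr0.
Qed.


Lemma LLc' k i j n : i + j = k -> (i - j)%:~R * cL n (D (L k)) = cL n (br (D (L i)) (L j)) + cL n (br (L i) (D (L j))).
Proof. by move<-; exact: LLc. Qed.
Lemma LLg' k i j n : i + j = k -> (i - j)%:~R * cG n (D (L k)) = cG n (br (D (L i)) (L j)) + cG n (br (L i) (D (L j))).
Proof. by move<-; exact: LLg. Qed.
Lemma LGc' k i j n : i + j = k -> (i%:~R / 2 - j%:~R) * cL n (D (G k)) = cL n (br (D (L i)) (G j)) + cL n (br (L i) (D (G j))).
Proof. by move<-; exact: LGc. Qed.
Lemma LGg' k i j n : i + j = k -> (i%:~R / 2 - j%:~R) * cG n (D (G k)) = cG n (br (D (L i)) (G j)) + cG n (br (L i) (D (G j))).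
Proof. by move<-; exact: LGg. Qed.

Lemma DF12 : cL 1 (D (G 1)) = 4 * cG 1 (D (L 1)) + 2 * cL 0 (D (G 0))
   /\ cG 1 (D (G 1)) = cL 1 (D (L 1)).
Proof.
have H1 := LGc' 1 1 0 1 erefl; have H2 := LGg' 1 1 0 1 erefl.
rewrite (cL_yG' 1) // (cL_Ly' 0) // in H1.
rewrite (cG_yG' 1) // (cG_Ly' 0) // P0 in H2.
split.
  have -> : cL 1 (D (G 1)) = 2 * ((1%:~R / 2 - 0%:~R) * cL 1 (D (G 1))) by field.
  by rewrite H1; field.
have -> : cG 1 (D (G 1)) = 2 * ((1%:~R / 2 - 0%:~R) * cG 1 (D (G 1))) by field.
by rewrite H2; field.
Qed.

Lemma DF3 : cL 0 (D (G 0)) = -4 * cG 1 (D (L 1)).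
Proof.
have Ha := LLg' 0 1 (-1) 0 erefl.
have Hb := LGc' (-1) (-1) 0 (-1) erefl.
have Hc := LGc' 0 1 (-1) 0 erefl.
rewrite (cG_yL' 1) // (cG_Ly' (-1)) // Z_G in Ha.
rewrite (cL_yG' (-1)) // (cL_Ly' 0) // in Hb.
rewrite (cL_yG' 1) // (cL_Ly' (-1)) // in Hc.
apply/eqP; rewrite -subr_eq0; apply/eqP.
apply: (lincomb3 (-(32/15)) (8/5) (-(2/5)) Ha Hb Hc).
by field.
Qed.

Lemma DFc1 : cL 1 (D (G 1)) = cL 0 (D (G 0)).
Proof. by case: DF12 => -> _; rewrite DF3; ring. Qed.
Lemma DFc1' : cL 1 (D (G 1)) = -4 * cG 1 (D (L 1)).
Proof. by rewrite DFc1 DF3. Qed.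
Lemma DFd1 : cG 1 (D (G 1)) = cL 1 (D (L 1)).
Proof. by case: DF12. Qed.

Lemma WLL' d m n : n - m = d -> d%:~R * cL n (D (L m)) = cL n (br A (L m)).
Proof. by move<-; exact: WLL. Qed.
Lemma WGL' d m n : n - m = d -> d%:~R * cG n (D (L m)) = cG n (br A (L m)).
Proof. by move<-; exact: WGL. Qed.
Lemma WLG' d m n : n - m = d -> d%:~R * cL n (D (G m)) = cL n (br A (G m)).
Proof. by move<-; exact: WLG. Qed.
Lemma WGG' d m n : n - m = d -> d%:~R * cG n (D (G m)) = cG n (br A (G m)).
Proof. by move<-; exact: WGG. Qed.
End Der.

Lemma half_ne (k : int) : k%:~R - 1 / 2 != 0 :> C.
Proof.
apply/eqP => H.
have H2 : ((2 * k)%:~R : C) = (1 : int)%:~R.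
  rewrite intrM (_ : k%:~R = 1 / 2); last by apply/eqP; rewrite -subr_eq0 H.
  by rewrite /= mulr1z; field.
have := intr_inj H2; lia.
Qed.

Lemma fam_bound (p : Fam) : exists B : nat, forall j : int, (B < `|j|)%N -> p@_j = 0.
Proof.
exists (\max_(x <- msupp p) `|x|%N) => j Hj.
apply: mcoeff_outdom; apply/negP => Hin.
have := @leq_bigmax_seq _ _ xpredT (fun x : int => `|x|%N) _ Hin isT.
by rewrite leqNgt Hj.
Qed.

Lemma down_ind (r : int -> C) (B : nat) : (forall j : int, (B < `|j|)%N -> r j = 0) ->
  (forall n : nat, r (Negz n.+1) = 0 -> r (Negz n) = 0) -> forall n, r (Negz n) = 0.
Proof.
move=> Hb Hs.
suff H : forall k n, (B < n + k)%N -> r (Negz n) = 0 by move=> n; apply: (H B.+1); lia.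
elim=> [|k IH] n Hn; first by apply: Hb; lia.
by apply: Hs; apply: IH; lia.
Qed.

Lemma up_ind (r : int -> C) (B : nat) : (forall j : int, (B < `|j|)%N -> r j = 0) ->
  (forall n : nat, (3 <= n)%N -> r (Posz n.+1) = 0 -> r (Posz n) = 0) ->
  forall n : nat, (3 <= n)%N -> r (Posz n) = 0.
Proof.
move=> Hb Hs.
suff H : forall k n, (3 <= n)%N -> (B < n + k)%N -> r (Posz n) = 0 by move=> n n3; apply: (H B.+1) => //; lia.
elim=> [|k IH] n n3 Hn; first by apply: Hb; lia.
by apply: Hs => //; apply: IH; lia.
Qed.

Lemma pm_zero (a c x y : C) : a != 0 -> c != 0 -> a * c * x = y -> (-a) * c * x = y -> x = 0.
Proof.
move=> a0 c0 E1 E2.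
have e : a * c * x - (-a) * c * x = 0 by rewrite E1 E2 subrr.
have : 2 * (a * (c * x)) = 0 by rewrite -e; ring.
move/two_eq0/eqP; rewrite mulf_eq0 (negbTE a0) /= mulf_eq0 (negbTE c0) /=.
by move/eqP.
Qed.

Section Main.
Variable Dl : S -> S.
Hypothesis HL : is_local_derivation Dl.
Hypothesis H0 : Dl (L 0) = 0.
Hypothesis H1 : Dl (L 1) = 0.

Lemma Dl_lin : is_linear Dl. Proof. by case: HL. Qed.

Lemma part1_rel (m : int) (a : C) : m != 0 -> a ^+ 2 * m%:~R = 1 ->
  (a * (m%:~R / 2)) * cL m (Dl (G 0)) = cG m (Dl (G 0)).
Proof.
move=> m0 Ha.
have E0 := Dl_lin a (L 0) (G 0).
rewrite H0 scaler0 add0r in E0.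
case: HL => _ /(_ (a *: L 0 + G 0)) [D [HD E]].
rewrite E0 (DD _ HD) (DZ _ HD) in E.
rewrite E cGD cLD cLZ cGZ.
have WX := WLG' _ HD _ _ _ (subr0 m); have WY := WGG' _ HD _ _ _ (subr0 m).
rewrite (cL_yG' m) ?subr0 // in WX. rewrite (cG_yG' m) ?subr0 // in WY.
have mz : m%:~R != 0 :> C by rewrite intr_eq0.
have HX : cL m (D (G 0)) = cG m (D (L 0)) * 2 / m%:~R.
  by rewrite -WX; field.
have HY : cG m (D (G 0)) = cL m (D (L 0)) / 2.
  by apply: (mulfI mz); rewrite WY; field.
rewrite HX HY.
apply/eqP; rewrite -subr_eq0; apply/eqP.
rewrite (_ : _ - _ = cL m (D (L 0)) / 2 * (a ^+ 2 * m%:~R - 1)); first by rewrite Ha subrr mulr0.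
by field.
Qed.

Lemma part1 (m : int) : m != 0 -> cL m (Dl (G 0)) = 0 /\ cG m (Dl (G 0)) = 0.
Proof.
move=> m0.
have mz : m%:~R != 0 :> C by rewrite intr_eq0.
set a := sqrtC (m%:~R^-1 : C).
have Ha : a ^+ 2 * m%:~R = 1 by rewrite sqrtCK mulVf.
have Ha' : (- a) ^+ 2 * m%:~R = 1 by rewrite sqrrN.
have a0 : a != 0.
  by apply/eqP => a0; move: Ha; rewrite a0 expr0n /= mul0r => /eqP; rewrite eq_sym oner_eq0.
have m2 : m%:~R / 2 != 0 :> C by rewrite mulf_eq0 negb_or mz invr_eq0 pnatr_eq0.
have R1 := part1_rel _ _ m0 Ha; have R2 := part1_rel _ _ m0 Ha'.
have Z := pm_zero _ _ _ _ a0 m2 R1 R2.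
by split=> //; rewrite -R1 Z mulr0.
Qed.

Lemma part2 : cG 0 (Dl (G 0)) = 0.
Proof.
case: HL => _ /(_ (G 0)) [D [HD ->]].
exact: P0.
Qed.

Lemma stepA1_rel (k : int) (a : C) : k != 0 ->
  a ^+ 2 * ((k%:~R - 1) * (k%:~R - 1 / 2)) = k%:~R - 2 ->
  a * (k%:~R - 1 / 2) * cL (k + 1) (Dl (G 1)) = 2 * cG (k + 1) (Dl (G 1)).
Proof.
move=> k0 Ha.
have E0 := Dl_lin a (L 1) (G 1).
rewrite H1 scaler0 add0r in E0.
case: HL => _ /(_ (a *: L 1 + G 1)) [D [HD E]].
rewrite E0 (DD _ HD) (DZ _ HD) in E.
rewrite E cGD cLD cLZ cGZ.
have kz : k%:~R != 0 :> C by rewrite intr_eq0.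
have W1 := WLL' _ HD _ _ _ (addrK 1 k).
have W2 := WGL' _ HD _ _ _ (addrK 1 k).
have W3 := WLG' _ HD _ _ _ (addrK 1 k).
have W4 := WGG' _ HD _ _ _ (addrK 1 k).
rewrite (cL_yL' k) ?addrK // in W1.
rewrite (cG_yL' k) ?addrK // in W2.
rewrite (cL_yG' k) ?addrK // in W3.
rewrite (cG_yG' k) ?addrK // in W4.
have HX1 : cL (k + 1) (D (L 1)) = cL k (D (L 0)) * (k - 1)%:~R / k%:~R by rewrite -W1; field.
have HX2 : cG (k + 1) (D (L 1)) = - (cG k (D (L 0)) * (1%:~R / 2 - k%:~R)) / k%:~R by rewrite -W2; field.
have HX3 : cL (k + 1) (D (G 1)) = cG k (D (L 0)) * 2 / k%:~R by rewrite -W3; field.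
have HX4 : cG (k + 1) (D (G 1)) = cL k (D (L 0)) * (k%:~R / 2 - 1%:~R) / k%:~R by rewrite -W4; field.
rewrite HX1 HX2 HX3 HX4.
apply/eqP; rewrite -subr_eq0; apply/eqP.
rewrite (_ : _ - _ = cL k (D (L 0)) / k%:~R * (a ^+ 2 * ((k%:~R - 1) * (k%:~R - 1 / 2)) - (k%:~R - 2))); first by rewrite Ha subrr mulr0.
by field.
Qed.

Lemma stepA1 (k : int) : k != 0 -> k != 1 -> k != 2 -> cL (k + 1) (Dl (G 1)) = 0.
Proof.
move=> k0 k1 k2.
have k1z : k%:~R - 1 != 0 :> C by rewrite (_ : 1 = (1 : int)%:~R) // -intrB intr_eq0 subr_eq0.
have k2z : k%:~R - 2 != 0 :> C by rewrite (_ : 2 = (2 : int)%:~R) // -intrB intr_eq0 subr_eq0.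
have dz : (k%:~R - 1) * (k%:~R - 1 / 2) != 0 :> C by rewrite mulf_eq0 negb_or k1z half_ne.
set a := sqrtC ((k%:~R - 2) / ((k%:~R - 1) * (k%:~R - 1 / 2)) : C).
have Ha : a ^+ 2 * ((k%:~R - 1) * (k%:~R - 1 / 2)) = k%:~R - 2 by rewrite sqrtCK divfK.
have Ha' : (- a) ^+ 2 * ((k%:~R - 1) * (k%:~R - 1 / 2)) = k%:~R - 2 by rewrite sqrrN.
have a0 : a != 0.
  by apply/eqP => a0; move: Ha; rewrite a0 expr0n /= mul0r => /eqP; rewrite eq_sym (negbTE k2z).
have R1 := stepA1_rel _ _ k0 Ha; have R2 := stepA1_rel _ _ k0 Ha'.
exact: (pm_zero _ _ _ _ a0 (half_ne k) R1 R2).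
Qed.

Lemma stepB_rel (t : C) : t ^+ 2 = - (1 / 4) -> t != 0 ->
  t * cL 1 (Dl (G 1)) = cG 1 (Dl (G 1)).
Proof.
move=> Ht t0.
have E0 := Dl_lin t (G 1) (L 1).
rewrite H1 [X in _ = X]addr0 in E0.
case: HL => _ /(_ (t *: G 1 + L 1)) [D [HD E]].
rewrite E0 (DD _ HD) (DZ _ HD) in E.
have EL := congr1 (cL 1) E; have EG := congr1 (cG 1) E.
rewrite cLZ cLD cLZ in EL; rewrite cGZ cGD cGZ in EG.
apply: (mulfI t0); rewrite EL EG (DFc1' _ HD) (DFd1 _ HD).
have -> : t * (t * (-4 * cG 1 (D (L 1))) + cL 1 (D (L 1))) =
   -4 * t ^+ 2 * cG 1 (D (L 1)) + t * cL 1 (D (L 1)) by ring.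
by rewrite Ht; field.
Qed.

Lemma stepB : cL 1 (Dl (G 1)) = 0.
Proof.
have i0 : ('i : C) != 0 by rewrite neq0Ci.
have h0 : (1 / 2 : C) != 0 by rewrite mulf_eq0 oner_eq0 invr_eq0 pnatr_eq0.
have Ht : ('i * (1 / 2)) ^+ 2 = - (1 / 4) :> C.
  by rewrite exprMn sqrCi; field.
have Ht' : ((- 'i) * (1 / 2)) ^+ 2 = - (1 / 4) :> C.
  by rewrite exprMn sqrrN sqrCi; field.
have t0 : ('i * (1 / 2)) != 0 :> C by rewrite mulf_neq0.
have t0' : ((- 'i) * (1 / 2)) != 0 :> C by rewrite mulf_neq0 ?oppr_eq0.
have R1 := stepB_rel _ Ht t0; have R2 := stepB_rel _ Ht' t0'.
exact: (pm_zero _ _ _ _ i0 h0 R1 R2).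
Qed.

Lemma stepA_rel (t : C) : t != 0 ->
  t ^+ 2 * cL 0 (Dl (G 0)) + t * cL 2 (Dl (G 1)) = t ^+ 2 * cL 1 (Dl (G 1)) + cL 3 (Dl (G 1)).
Proof.
move=> t0.
have E0 := Dl_lin t (G 1) (G 0).
case: HL => _ /(_ (t *: G 1 + G 0)) [D [HD E]].
rewrite E0 (DD _ HD) (DZ _ HD) in E.
have EQ j : t * cL j (D (G 1)) + cL j (D (G 0)) = t * cL j (Dl (G 1)) + cL j (Dl (G 0)).
  have L1 : cL j (t *: Dl (G 1) + Dl (G 0)) = t * cL j (Dl (G 1)) + cL j (Dl (G 0)) by rewrite cLD cLZ.
  have R1 : cL j (t *: D (G 1) + D (G 0)) = t * cL j (D (G 1)) + cL j (D (G 0)) by rewrite cLD cLZ.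
  by rewrite -L1 -R1; exact: (congr1 (cL j) (esym E)).
pose r := fun j => cG j (D (L 0)) * 2.
have WX j : j%:~R * cL j (D (G 0)) = r j.
  by rewrite (WLG' _ HD _ _ _ (subr0 j)) (cL_yG' j) ?subr0.
have WY j k : j - 1 = k -> k%:~R * cL j (D (G 1)) = r k.
  by move=> ejk; rewrite (WLG' _ HD _ _ _ ejk) (cL_yG' k).
have vz j : j != 0 -> cL j (Dl (G 0)) = 0 by move=> /part1 [].
have gz j : j - 1 != 0 -> j - 1 != 1 -> j - 1 != 2 -> cL j (Dl (G 1)) = 0.
  by move=> a b c; have := stepA1 _ a b c; rewrite subrK.
have [B HB] := fam_bound (D (L 0)).2.
have rB : forall j, (B < `|j|)%N -> r j = 0 by move=> j Hj; rewrite /r /cG HB // mul0r.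
have step_down : forall n : nat, r (Negz n.+1) = 0 -> r (Negz n) = 0.
  move=> n Hn.
  have Yj : cL (Negz n) (D (G 1)) = 0.
    have := WY (Negz n) (Negz n.+1); rewrite Hn => /(_ ltac:(lia)).
    by move/eqP; rewrite mulf_eq0 intr_eq0 => /orP [/eqP|/eqP //]; lia.
  have Xj : cL (Negz n) (D (G 0)) = 0.
    have := EQ (Negz n); rewrite Yj mulr0 add0r vz ?gz ?mulr0 ?addr0 //; lia.
  by rewrite -(WX (Negz n)) Xj mulr0.
have step_up : forall n : nat, (3 <= n)%N -> r (Posz n.+1) = 0 -> r (Posz n) = 0.
  move=> n n3 Hn.
  have Xj : cL (Posz n.+1) (D (G 0)) = 0.
    have := WX (Posz n.+1); rewrite Hn.
    by move/eqP; rewrite mulf_eq0 intr_eq0 => /orP [/eqP|/eqP //]; lia.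
  have Yj : cL (Posz n.+1) (D (G 1)) = 0.
    have := EQ (Posz n.+1); rewrite Xj addr0 vz ?gz ?mulr0 ?addr0; try lia.
    by move/eqP; rewrite mulf_eq0 (negbTE t0) => /eqP.
  have := WY (Posz n.+1) (Posz n) ltac:(lia).
  by rewrite Yj mulr0 => <-.
have rm1 : r (-1) = 0 by exact: (down_ind _ _ rB step_down 0).
have r3 : r 3 = 0 by exact: (up_ind _ _ rB step_up 3 isT).
have Y0 : cL 0 (D (G 1)) = 0.
  by have := WY 0 (-1) erefl; rewrite rm1 => /eqP; rewrite mulf_eq0 intr_eq0 => /orP [//|/eqP //].
have X0 : cL 0 (D (G 0)) = cL 0 (Dl (G 0)).
  by have := EQ 0; rewrite Y0 mulr0 add0r (gz 0) // mulr0 add0r.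
have Y1 : cL 1 (D (G 1)) = cL 0 (Dl (G 0)) by rewrite (DFc1 _ HD) X0.
have EQ1 := EQ 1; rewrite Y1 (vz 1) // addr0 in EQ1.
have WX1 := WX 1; have EQ2 := EQ 2; rewrite (vz 2) // addr0 in EQ2.
have WX2 := WX 2; have WY2 := WY 2 1 erefl.
have EQ3 := EQ 3; rewrite (vz 3) // addr0 in EQ3.
have WX3 := WX 3; rewrite r3 in WX3; have WY3 := WY 3 2 erefl.
have X3 : cL 3 (D (G 0)) = 0.
  by move/eqP: WX3; rewrite mulf_eq0 intr_eq0 => /orP [//|/eqP].
rewrite X3 addr0 in EQ3; move/(mulfI t0): EQ3 => EQ3.
have X2 : cL 2 (D (G 0)) = cL 3 (Dl (G 1)).
  rewrite -EQ3; apply: (mulfI (_ : (2 : int)%:~R != 0 :> C)); first by rewrite intr_eq0.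
  by rewrite WX2 WY3.
have Y2 : cL 2 (D (G 1)) = cL 1 (D (G 0)).
  apply: (mulfI (_ : (1 : int)%:~R != 0 :> C)); first by rewrite intr_eq0.
  by rewrite WX1 WY2.
rewrite Y2 X2 in EQ2.
rewrite -EQ2 (_ : t ^+ 2 * cL 0 (Dl (G 0)) + (t * cL 1 (D (G 0)) + cL 3 (Dl (G 1))) =
   t * (t * cL 0 (Dl (G 0)) + cL 1 (D (G 0))) + cL 3 (Dl (G 1))); last by ring.
by rewrite EQ1; ring.
Qed.


Lemma stepA : cL 0 (Dl (G 0)) = cL 1 (Dl (G 1)).
Proof.
have Ra := stepA_rel 1 (oner_neq0 C).
have Rb := stepA_rel (-1) ltac:(by rewrite oppr_eq0 oner_eq0).
have Rc := stepA_rel 2 ltac:(by rewrite pnatr_eq0).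
apply/eqP; rewrite -subr_eq0; apply/eqP.
apply: (lincomb3 (-(1/2)) (1/6) (1/3) Ra Rb Rc).
by field.
Qed.

Lemma main : Dl (G 0) = 0.
Proof.
apply: S_ext => n; rewrite ?cL0 ?cG0.
  have [->|n0] := eqVneq n 0; last by case: (part1 _ n0).
  by rewrite stepA stepB.
have [->|n0] := eqVneq n 0; last by case: (part1 _ n0).
exact: part2.
Qed.
End Main.

Theorem lemma4p1 (Delta : S -> S) :
  is_local_derivation Delta -> Delta (L 0) = 0 -> Delta (L 1) = 0 ->
  Delta (G 0) = 0.
Proof. by move=> HL H0 H1; apply: main. Qed.
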